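(* Let $(G,\mathcal{B}_1,\mathcal{B}_2)$ be a Rota-Baxter system of groups whose cocycle $\Phi(a)=\mathcal{B}_1(a)\mathcal{B}_2(a)$ is bijective. Then $\widetilde{\mathcal{B}}:G\to G$, $\widetilde{\mathcal{B}}(a)=\mathcal{B}_1(\Phi^{-1}(a))$, is a Rota-Baxter operator of weight $-1$, and $\mathcal{B}:G\to G$, $\mathcal{B}(a)=\mathcal{B}_2(\Phi^{-1}(a))^{-1}$, is a Rota-Baxter operator of weight $1$.
   Context: A Rota-Baxter system of groups is a triple $(G,\mathcal{B}_1,\mathcal{B}_2)$ where $G$ is a group and $\mathcal{B}_1,\mathcal{B}_2:G\to G$ are maps such that for all $a,b\in G$: $\mathcal{B}_1(a)\mathcal{B}_1(b)=\mathcal{B}_1(\mathcal{B}_1(a)b\mathcal{B}_2(a))$ and $\mathcal{B}_2(b)\mathcal{B}_2(a)=\mathcal{B}_2(\mathcal{B}_1(a)b\mathcal{B}_2(a))$. A map $\mathcal{B}:G\to G$ is a Rota-Baxter operator of weight $1$ if $\mathcal{B}(a)\mathcal{B}(b)=\mathcal{B}(a\mathcal{B}(a)b\mathcal{B}(a)^{-1})$ for all $a,b\in G$; a map $\mathcal{C}:G\to G$ is a Rota-Baxter operator of weight $-1$ if $\mathcal{C}(a)\mathcal{C}(b)=\mathcal{C}(\mathcal{C}(a)b\mathcal{C}(a)^{-1}a)$ for all $a,b\in G$. *)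

(* Defs.v *)
From mathcomp Require Import ssreflect ssrfun ssrbool.
Set Implicit Arguments. Unset Strict Implicit. Unset Printing Implicit Defensive.

Record is_group (G : Type) (mul : G -> G -> G) (one : G) (inv : G -> G) : Prop := {
  grp_assoc : forall a b c, mul a (mul b c) = mul (mul a b) c;
  grp_mul1g : forall a, mul one a = a;
  grp_mulg1 : forall a, mul a one = a;
  grp_mulVg : forall a, mul (inv a) a = one;
  grp_mulgV : forall a, mul a (inv a) = one }.

Definition RB_system (G : Type) (mul : G -> G -> G) (B1 B2 : G -> G) : Prop :=
  forall a b : G,
    mul (B1 a) (B1 b) = B1 (mul (mul (B1 a) b) (B2 a)) /\
    mul (B2 b) (B2 a) = B2 (mul (mul (B1 a) b) (B2 a)).

Definition RB_op_weight1 (G : Type) (mul : G -> G -> G) (inv : G -> G) (B : G -> G) : Prop :=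
  forall a b : G, mul (B a) (B b) = B (mul (mul (mul a (B a)) b) (inv (B a))).

Definition RB_op_weight_neg1 (G : Type) (mul : G -> G -> G) (inv : G -> G) (C : G -> G) : Prop :=
  forall a b : G, mul (C a) (C b) = C (mul (mul (mul (C a) b) (inv (C a))) a).

(* Main.v *)
Require Import Defs.
From mathcomp Require Import ssreflect ssrfun ssrbool.

Theorem proposition3p11 (G : Type) (mul : G -> G -> G) (one : G) (inv : G -> G)
    (B1 B2 : G -> G) (Phiinv : G -> G) :
  is_group mul one inv ->
  RB_system mul B1 B2 ->
  cancel (fun a => mul (B1 a) (B2 a)) Phiinv ->
  cancel Phiinv (fun a => mul (B1 a) (B2 a)) ->
  RB_op_weight_neg1 mul inv (fun a => B1 (Phiinv a)) /\
  RB_op_weight1 mul inv (fun a => inv (B2 (Phiinv a))).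
Proof.
move=> [A M1 M1' MV MV'] RB K1 K2.
have invK : forall g, inv (inv g) = g.
  move=> g; rewrite -[LHS]M1' -(MV g) A MV M1. by [].
have invM : forall g h, inv (mul g h) = mul (inv h) (inv g).
  move=> g h.
  rewrite -[RHS]M1' -(MV' (mul g h)) !A -[mul (mul (inv h) (inv g)) g]A MV M1' MV M1.
  by [].
split=> a b; rewrite -(K2 a) -(K2 b); move: (Phiinv a) (Phiinv b) => x y /=;
  rewrite !K1.
- have [E1 E2] := RB x y.
  have -> : mul (mul (mul (B1 x) (mul (B1 y) (B2 y))) (inv (B1 x))) (mul (B1 x) (B2 x))
       = mul (B1 (mul (mul (B1 x) y) (B2 x))) (B2 (mul (mul (B1 x) y) (B2 x))).
    rewrite -E1 -E2 !A -[mul (mul (mul (mul (B1 x) (B1 y)) (B2 y)) (inv (B1 x))) (B1 x)]A.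
    by rewrite MV M1'.
  by rewrite K1 E1.
- have [E1 E2] := RB x y.
  rewrite -invM E2.
  have -> : mul (mul (mul (mul (B1 x) (B2 x)) (inv (B2 x))) (mul (B1 y) (B2 y))) (inv (inv (B2 x)))
       = mul (B1 (mul (mul (B1 x) y) (B2 x))) (B2 (mul (mul (B1 x) y) (B2 x))).
    by rewrite -E1 -E2 invK -(A (B1 x) (B2 x)) MV' M1' !A.
  by rewrite K1.
Qed.
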